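(* Let $T=T_\lambda$ ($\lambda\in(1,2)$) be a tent map with critical point $c$ and kneading sequence $K$. For $n\in\mathbb N$ and $\mathbf s\in\{0,1\}^n$, the sequence $\mathbf s^\frown\mathcal I(c)$ is the itinerary of some pre-critical point (a point $p$ with $T^i(p)=c$ for some $i$) in $[0,T(c)]$ if and only if at least one of the following holds: (1) $\mathbf s=0^n$; (2) $\sigma^k(\mathbf s^\frown\mathcal I(c))\prec K$ for every $0\le k\le n$; (3) $c$ lies in a periodic orbit of period $m$ with $\mathcal I(c)=(C^\frown\mathbf t)^\infty$ (so $\mathbf t\in\{0,1\}^{m-1}$) and $\mathbf s=\sigma^k(\mathbf t)$ (the word $\mathbf t$ with its first $k$ symbols deleted) for some $0\le k<m-1$.
   Context: For $\lambda\in(1,2]$ the tent map $T_\lambda:[0,1]\to[0,1]$ is $T_\lambda(x)=\lambda x$ on $[0,1/2]$ and $\lambda(1-x)$ on $[1/2,1]$, with critical point $c=1/2$. $\Omega=\{0,1,C\}$. The address of $x$ is $0$ if $x<c$, $C$ if $x=c$, $1$ if $x>c$; the itinerary $\mathcal I(x)$ is the sequence of addresses of $x,T(x),T^2(x),\dots$; $\mathcal I^+(x)=\lim_{y\downarrow x}\mathcal I(y)$ in the product topology on $\Omega^{\mathbb N}$. The kneading sequence is $K=\sigma(\mathcal I^+(c))$, $\sigma$ the shift; $^\frown$ denotes concatenation. A word is even if it contains an even number of $1$'s, odd otherwise. Parity lexicographic order: $0<C<1$; for sequences $\mathbf s\ne\mathbf t$ first differing at index $k$, $\mathbf s\prec\mathbf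 t$ iff either $s_0\dots s_{k-1}$ is even and $s_k<t_k$, or it is odd and $s_k>t_k$. *)

(* Defs.v *)
From Stdlib Require Import Reals Lra List Arith.
Open Scope R_scope.

Inductive sym : Type := S0 | SC | S1.

Definition tent (lam x : R) : R :=
  if Rle_dec x (1/2) then lam * x else lam * (1 - x).

Definition crit : R := 1/2.

Fixpoint iterT (lam : R) (n : nat) (x : R) : R :=
  match n with
  | O => x
  | S k => tent lam (iterT lam k x)
  end.

Definition address (x : R) : sym :=
  match total_order_T x crit with
  | inleft (left _) => S0
  | inleft (right _) => SC
  | inright _ => S1
  end.

Definition itin (lam x : R) : nat -> sym := fun n => address (iterT lam n x).

(* s is the right limit I^+(x) = lim_{y downarrow x} I(y) in the product
   topology on Omega^N: every finite prefix is eventually constant. *)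
Definition right_limit_itin (lam x : R) (s : nat -> sym) : Prop :=
  forall N : nat, exists delta : R, 0 < delta /\
    forall y : R, x < y < x + delta -> forall i : nat, (i <= N)%nat -> itin lam y i = s i.

Definition shift (k : nat) (u : nat -> sym) : nat -> sym := fun i => u (i + k)%nat.

Definition wconcat (w : list sym) (u : nat -> sym) : nat -> sym :=
  fun i => if Nat.ltb i (length w) then nth i w S0 else u (i - length w)%nat.

Definition repeat_inf (w : list sym) : nat -> sym :=
  fun i => nth (i mod length w) w S0.

Definition sym_rank (a : sym) : nat :=
  match a with S0 => 0 | SC => 1 | S1 => 2 end%nat.
Definition sym_lt (a b : sym) : Prop := (sym_rank a < sym_rank b)%nat.

Fixpoint count1 (u : nat -> sym) (k : nat) : nat :=
  match k with
  | O => O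
  | S j => (count1 u j + (match u j with S1 => 1 | _ => 0 end))%nat
  end.

Definition plex_lt (s t : nat -> sym) : Prop :=
  exists k : nat, (forall i, (i < k)%nat -> s i = t i) /\
    ((Nat.Even (count1 s k) /\ sym_lt (s k) (t k)) \/
     (Nat.Odd (count1 s k) /\ sym_lt (t k) (s k))).

Definition binary_word (w : list sym) : Prop := Forall (fun a => a = S0 \/ a = S1) w.

Definition prime_period (lam x : R) (m : nat) : Prop :=
  (1 <= m)%nat /\ iterT lam m x = x /\
  forall j : nat, (0 < j < m)%nat -> iterT lam j x <> x.

(* Main.v *)
Require Import Defs.
From Stdlib Require Import Reals List Arith Lra Lia Classical FunctionalExtensionality.
Open Scope R_scope.

Lemma iterT_S' lam n x : iterT lam (S n) x = iterT lam n (tent lam x).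
Proof. induction n; simpl in *; [reflexivity|]. rewrite IHn; reflexivity. Qed.

Lemma iterT_add lam a b x : iterT lam (a + b) x = iterT lam a (iterT lam b x).
Proof. induction a; simpl; [reflexivity|]. rewrite IHa; reflexivity. Qed.

Lemma itin_shift lam k x i : itin lam x (i + k) = itin lam (iterT lam k x) i.
Proof. unfold itin; rewrite iterT_add; reflexivity. Qed.

Lemma itin_S lam x i : itin lam x (S i) = itin lam (tent lam x) i.
Proof. unfold itin; rewrite iterT_S'; reflexivity. Qed.

Lemma addr0 x : address x = S0 <-> x < crit.
Proof. unfold address; destruct (total_order_T x crit) as [[H|H]|H]; split; intro; try lra; try discriminate; auto. Qed.
Lemma addrC x : address x = SC <-> x = crit.
Proof. unfold address; destruct (total_order_T x crit) as [[H|H]|H]; split; intro; try lra; try discriminate; auto. Qed.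
Lemma addr1 x : address x = S1 <-> crit < x.
Proof. unfold address; destruct (total_order_T x crit) as [[H|H]|H]; split; intro; try lra; try discriminate; auto. Qed.

Lemma addr_lt a b : a < b -> address a <> address b -> sym_lt (address a) (address b).
Proof.
  intros Hab Hne. unfold sym_lt, address, sym_rank in *;
  destruct (total_order_T a crit) as [[?|?]|?]; destruct (total_order_T b crit) as [[?|?]|?];
  try lia; try congruence; exfalso; lra.
Qed.

Lemma tent_le lam x : 0 < lam -> tent lam x <= lam/2.
Proof. intros. unfold tent; destruct Rle_dec; nra. Qed.

Lemma tent_01 lam x : 0 < lam <= 2 -> 0 <= x <= 1 -> 0 <= tent lam x <= 1.
Proof. intros. unfold tent; destruct Rle_dec; split; nra. Qed.

Lemma iterT_01 lam n x : 0 < lam <= 2 -> 0 <= x <= 1 -> 0 <= iterT lam n x <= 1.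
Proof. intros. induction n; simpl; auto. apply tent_01; auto. Qed.

Lemma tent_top lam x : 0 < lam -> tent lam x = lam/2 -> x = crit.
Proof. intros H. unfold tent, crit; destruct Rle_dec; intro E; nra. Qed.

Lemma tent_crit lam : tent lam crit = lam/2.
Proof. unfold tent, crit; destruct Rle_dec; lra. Qed.

Lemma count1_ext u v k : (forall i, (i < k)%nat -> u i = v i) -> count1 u k = count1 v k.
Proof.
  induction k; intros H; simpl; auto.
  rewrite IHk by (intros; apply H; lia). rewrite H by lia. reflexivity.
Qed.

Lemma plex_transfer a b a' b' d :
  (forall i, (i < d)%nat -> a i = b i) ->
  ((Nat.Even (count1 a d) /\ sym_lt (a d) (b d)) \/ (Nat.Odd (count1 a d) /\ sym_lt (b d) (a d))) ->
  (forall i, (i <= d)%nat -> a' i = a i) -> (forall i, (i <= d)%nat -> b' i = b i) ->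
  plex_lt a' b'.
Proof.
  intros H1 H2 Ha Hb. exists d. split.
  - intros i Hi. rewrite Ha, Hb by lia. auto.
  - rewrite (count1_ext a' a d) by (intros; apply Ha; lia).
    rewrite Ha, Hb by lia. exact H2.
Qed.

Lemma plex_asym a b : plex_lt a b -> plex_lt b a -> False.
Proof.
  intros [k1 [H1 C1]] [k2 [H2 C2]]. unfold sym_lt in *.
  destruct (lt_eq_lt_dec k1 k2) as [[Hl|He]|Hl].
  - specialize (H2 k1 Hl). rewrite H2 in C1. destruct C1 as [[_ X]|[_ X]]; lia.
  - subst. rewrite (count1_ext b a k2) in C2 by (intros; symmetry; auto).
    destruct C1 as [[E1 X1]|[E1 X1]]; destruct C2 as [[E2 X2]|[E2 X2]]; try lia;
    eapply Nat.Even_Odd_False; eauto.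
  - specialize (H1 k2 Hl). rewrite H1 in C2. destruct C2 as [[_ X]|[_ X]]; lia.
Qed.

Definition Pm lam x w i : Prop :=
  (forall j, (j < i)%nat -> itin lam x j = itin lam w j /\ itin lam x j <> SC) /\
  ((Nat.Even (count1 (itin lam x) i) /\ iterT lam i w - iterT lam i x = lam ^ i * (w - x)) \/
   (Nat.Odd (count1 (itin lam x) i) /\ iterT lam i w - iterT lam i x = - (lam ^ i * (w - x)))).

Lemma tent_same lam a b : address a = address b -> address a <> SC ->
  (address a = S0 /\ tent lam b - tent lam a = lam*(b-a)) \/
  (address a = S1 /\ tent lam b - tent lam a = -(lam*(b-a))).
Proof.
  intros He Hn. unfold tent. unfold address in *.
  destruct (total_order_T a crit) as [[?|?]|?]; destruct (total_order_T b crit) as [[?|?]|?];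
  try congruence; unfold crit in *;
  destruct (Rle_dec a (1/2)); destruct (Rle_dec b (1/2)); try lra;
  [left|right]; split; auto; ring.
Qed.

Lemma mono lam x w : 1 < lam <= 2 -> 0 <= x -> x < w -> w <= 1 ->
  exists d, (forall j, (j < d)%nat -> itin lam x j = itin lam w j /\ itin lam x j <> SC) /\
   ((Nat.Even (count1 (itin lam x) d) /\ sym_lt (itin lam x d) (itin lam w d)) \/
    (Nat.Odd (count1 (itin lam x) d) /\ sym_lt (itin lam w d) (itin lam x d))).
Proof.
  intros Hl Hx Hxw Hw.
  assert (Hb : forall i, Pm lam x w i -> lam ^ i * (w - x) <= 1).
  { intros i [_ H]. pose proof (iterT_01 lam i x ltac:(lra) ltac:(lra)).
    pose proof (iterT_01 lam i w ltac:(lra) ltac:(lra)). destruct H as [[_ H]|[_ H]].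
    - lra.
    - assert (0 < lam ^ i * (w - x)) by (apply Rmult_lt_0_compat; [apply pow_lt|]; lra). lra. }
  assert (HN : exists N, lam ^ N * (w - x) > 1).
  { destruct (Pow_x_infinity lam ltac:(rewrite Rabs_right; lra) (2 / (w - x))) as [N HN].
    exists N. specialize (HN N (le_n N)). rewrite Rabs_right in HN
      by (apply Rle_ge, pow_le; lra).
    apply Rge_le in HN. apply (Rmult_le_compat_r (w - x)) in HN; [|lra].
    replace (2 / (w - x) * (w - x)) with 2 in HN by (field; lra). lra. }
  assert (HP0 : Pm lam x w 0).
  { split. intros; lia. left. split. exists 0%nat; reflexivity. simpl; ring. }
  assert (Hd : exists d, Pm lam x w d /\ ~ Pm lam x w (S d)).
  { apply NNPP; intro H. assert (Hall : forall d, Pm lam x w d).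
    { induction d; auto. apply NNPP; intro Hn; apply H; exists d; auto. }
    destruct HN as [N HN]. specialize (Hb N (Hall N)). lra. }
  destruct Hd as [d [[Hpre Hdiff] Hn]].
  exists d. split; [exact Hpre|].
  assert (HL : 0 < lam ^ d * (w - x)) by (apply Rmult_lt_0_compat; [apply pow_lt|]; lra).
  assert (Hne : itin lam x d <> itin lam w d).
  { intro He. apply Hn. unfold itin in He.
    assert (HnC : address (iterT lam d x) <> SC).
    { intro HC. rewrite HC in He. symmetry in He. apply addrC in He. apply addrC in HC.
      destruct Hdiff as [[_ D]|[_ D]]; rewrite He, HC in D; lra. }
    assert (Hpre' : forall j, (j < S d)%nat -> itin lam x j = itin lam w j /\ itin lam x j <> SC).
    { intros j Hj. destruct (Nat.eq_dec j d).
      - subst. unfold itin. auto.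
      - apply Hpre; lia. }
    split; [exact Hpre'|].
    cbn [count1 iterT pow].
    destruct (tent_same lam _ _ He HnC) as [[A T]|[A T]]; replace (itin lam x d) with (address (iterT lam d x)) by reflexivity; rewrite A; rewrite T.
    - rewrite Nat.add_0_r. destruct Hdiff as [[E D]|[E D]]; [left|right]; split; auto; rewrite D; ring.
    - rewrite Nat.add_1_r. destruct Hdiff as [[E D]|[E D]]; [right|left]; split;
      try (apply (proj2 (Nat.Odd_succ _)); auto); try (apply (proj2 (Nat.Even_succ _)); auto); rewrite D; ring. }
  destruct Hdiff as [[E D]|[E D]]; [left|right]; split; auto; unfold itin in *.
  - apply addr_lt; auto. lra.
  - apply addr_lt; auto. lra.
Qed.

Lemma tent_right lam y : crit < y -> tent lam y = lam * (1 - y).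
Proof. unfold tent, crit; destruct Rle_dec; lra. Qed.

Lemma lemA lam Kplus x j : 1 < lam <= 2 -> right_limit_itin lam crit Kplus ->
  0 <= x -> x < lam/2 -> itin lam x j = SC -> plex_lt (itin lam x) (shift 1 Kplus).
Proof.
  intros Hl HK Hx0 Hx Hj.
  destruct (HK (S j)) as [del [Hdel Hy]].
  set (e := Rmin del ((lam/2 - x)/lam)).
  assert (He1 : 0 < e).
  { unfold e; apply Rmin_glb_lt; auto. apply Rdiv_lt_0_compat; lra. }
  assert (He2 : e <= del) by apply Rmin_l.
  assert (He3 : e <= (lam/2 - x)/lam) by apply Rmin_r.
  assert (He4 : lam * e <= lam/2 - x).
  { apply (Rmult_le_compat_l lam) in He3; [|lra]. replace (lam * ((lam/2 - x)/lam)) with (lam/2 - x) in He3 by (field; lra). exact He3. }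
  set (y := crit + e/2).
  assert (Hy1 : crit < y < crit + del) by (unfold y; lra).
  assert (HTy : tent lam y = lam * (1 - y)) by (apply tent_right; lra).
  assert (Hlt : x < tent lam y) by (rewrite HTy; unfold y, crit; nra).
  assert (HTy1 : tent lam y <= 1) by (pose proof (tent_le lam y ltac:(lra)); lra).
  destruct (mono lam x (tent lam y) Hl Hx0 Hlt HTy1) as [d [Hp Hc]].
  assert (Hdj : (d <= j)%nat).
  { destruct (le_lt_dec d j); auto. destruct (Hp j l) as [_ X]. congruence. }
  eapply plex_transfer; [exact (fun i H => proj1 (Hp i H)) | exact Hc | intros; reflexivity |].
  intros i Hi. unfold shift. rewrite Nat.add_1_r. rewrite <- itin_S. symmetry. apply Hy; auto. lia.
Qed.

Lemma lemB lam Kplus z j : 1 < lam <= 2 -> right_limit_itin lam crit Kplus ->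
  lam/2 <= z -> z <= 1 -> itin lam z j = SC -> plex_lt (shift 1 Kplus) (itin lam z).
Proof.
  intros Hl HK Hz0 Hz Hj.
  destruct (HK (S j)) as [del [Hdel Hy]].
  set (e := Rmin del (1/2)).
  assert (He1 : 0 < e) by (unfold e; apply Rmin_glb_lt; lra).
  assert (He2 : e <= del) by apply Rmin_l.
  assert (He3 : e <= 1/2) by apply Rmin_r.
  set (y := crit + e/2).
  assert (Hy1 : crit < y < crit + del) by (unfold y; lra).
  assert (HTy : tent lam y = lam * (1 - y)) by (apply tent_right; lra).
  assert (Hlt : tent lam y < z) by (rewrite HTy; unfold y, crit; nra).
  assert (HTy0 : 0 <= tent lam y) by (rewrite HTy; unfold y, crit; nra).
  destruct (mono lam (tent lam y) z Hl HTy0 Hlt Hz) as [d [Hp Hc]].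
  assert (Hdj : (d <= j)%nat).
  { destruct (le_lt_dec d j); auto. destruct (Hp j l) as [X _]. rewrite Hj in X. destruct (Hp j l); congruence. }
  eapply plex_transfer; [exact (fun i H => proj1 (Hp i H)) | exact Hc | | intros; reflexivity].
  intros i Hi. unfold shift. rewrite Nat.add_1_r. rewrite <- itin_S. symmetry. apply Hy; auto. lia.
Qed.

Lemma wconcat_cons a w u : wconcat (a::w) u = fun i => match i with O => a | S j => wconcat w u j end.
Proof. apply functional_extensionality; intros [|i]; reflexivity. Qed.

Lemma wconcat_nil u : wconcat nil u = u.
Proof. apply functional_extensionality; intros i; unfold wconcat; simpl. rewrite Nat.sub_0_r; reflexivity. Qed.

Lemma wconcat_len w u : wconcat w u (length w) = u O.
Proof. unfold wconcat. rewrite Nat.ltb_irrefl, Nat.sub_diag. reflexivity. Qed.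

Lemma wconcat_lt w u i : (i < length w)%nat -> wconcat w u i = nth i w S0.
Proof. intros H. unfold wconcat. apply Nat.ltb_lt in H. rewrite H. reflexivity. Qed.

Lemma step0 lam q : 1 < lam -> 0 <= q < lam/2 ->
  0 <= q/lam < 1/2 /\ itin lam (q/lam) = fun i => match i with O => S0 | S j => itin lam q j end.
Proof.
  intros Hl Hq.
  assert (H1 : 0 <= q/lam < 1/2).
  { split. apply Rmult_le_pos; [lra|left; apply Rinv_0_lt_compat; lra]. apply (Rmult_lt_reg_l lam); [lra|].
    replace (lam * (q/lam)) with q by (field; lra). lra. }
  split; auto. apply functional_extensionality; intros [|i].
  - unfold itin; simpl. apply addr0. unfold crit; lra.
  - rewrite itin_S. f_equal. unfold tent; destruct Rle_dec; [field; lra|lra].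
Qed.

Lemma step1 lam q : 1 < lam -> 0 <= q < lam/2 ->
  1/2 < 1 - q/lam <= 1 /\ itin lam (1 - q/lam) = fun i => match i with O => S1 | S j => itin lam q j end.
Proof.
  intros Hl Hq.
  assert (H1 : 0 <= q/lam < 1/2).
  { split. apply Rmult_le_pos; [lra|left; apply Rinv_0_lt_compat; lra]. apply (Rmult_lt_reg_l lam); [lra|].
    replace (lam * (q/lam)) with q by (field; lra). lra. }
  assert (H2 : 1/2 < 1 - q/lam <= 1) by lra.
  split; auto. apply functional_extensionality; intros [|i].
  - unfold itin; simpl. apply addr1. unfold crit; lra.
  - rewrite itin_S. f_equal. unfold tent; destruct Rle_dec; [lra|field; lra].
Qed.

Lemma build0 lam n : 1 < lam <= 2 -> exists q, 0 <= q <= 1/2 /\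
  itin lam q = wconcat (repeat S0 n) (itin lam crit).
Proof.
  intros Hl. induction n.
  - exists crit. rewrite wconcat_nil. unfold crit; split; [lra|reflexivity].
  - destruct IHn as [q [Hq E]]. destruct (step0 lam q ltac:(lra) ltac:(lra)) as [H1 H2].
    exists (q/lam). split; [lra|]. rewrite H2, E. simpl repeat. rewrite wconcat_cons. reflexivity.
Qed.

Lemma build lam Kplus w : 1 < lam <= 2 -> right_limit_itin lam crit Kplus -> binary_word w ->
  (forall k, (k <= length w)%nat -> plex_lt (shift k (wconcat w (itin lam crit))) (shift 1 Kplus)) ->
  exists q, 0 <= q <= lam/2 /\ itin lam q = wconcat w (itin lam crit).
Proof.
  intros Hl HK. induction w as [|a w IH]; intros Hb Hp.
  - exists crit. rewrite wconcat_nil. unfold crit; split; [lra|reflexivity].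
  - inversion Hb as [|? ? Ha Hb']; subst.
    assert (Hs : forall k, shift (S k) (wconcat (a::w) (itin lam crit)) = shift k (wconcat w (itin lam crit))).
    { intros k. apply functional_extensionality; intros i. unfold shift. rewrite Nat.add_succ_r. reflexivity. }
    destruct (IH Hb') as [q [Hq E]].
    { intros k Hk. rewrite <- Hs. apply Hp. simpl; lia. }
    assert (HC : itin lam q (length w) = SC).
    { rewrite E, wconcat_len. unfold itin; simpl. apply addrC; reflexivity. }
    assert (Hq2 : q < lam/2).
    { destruct (Rle_lt_or_eq_dec _ _ (proj2 Hq)) as [?|Heq]; auto. exfalso.
      apply (plex_asym (itin lam q) (shift 1 Kplus)).
      - rewrite E. replace (wconcat w (itin lam crit)) with (shift 1 (wconcat (a::w) (itin lam crit))) by (rewrite Hs; apply functional_extensionality; intro i; unfold shift; rewrite Nat.add_0_r; reflexivity). apply Hp; simpl; lia.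
      - apply (lemB lam Kplus q (length w)); auto; lra. }
    destruct Ha as [-> | ->].
    + destruct (step0 lam q ltac:(lra) ltac:(lra)) as [H1 H2]. exists (q/lam). split; [lra|].
      rewrite H2, E, wconcat_cons. reflexivity.
    + destruct (step1 lam q ltac:(lra) ltac:(lra)) as [H1 H2]. exists (1 - q/lam).
      assert (Hit : itin lam (1 - q/lam) = wconcat (S1 :: w) (itin lam crit)).
      { rewrite H2, E, wconcat_cons. reflexivity. }
      split; [|exact Hit]. split; [lra|].
      destruct (Rle_lt_dec (1 - q/lam) (lam/2)) as [?|Hgt]; auto. exfalso.
      apply (plex_asym (itin lam (1 - q/lam)) (shift 1 Kplus)).
      * rewrite Hit. replace (wconcat (S1 :: w) (itin lam crit)) with (shift 0 (wconcat (S1 :: w) (itin lam crit))).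
        apply Hp; lia. apply functional_extensionality; intros i; unfold shift; rewrite Nat.add_0_r; reflexivity.
      * apply (lemB lam Kplus _ (S (length w))); auto; try lra.
        rewrite Hit. replace (S (length w)) with (length (S1::w)) by reflexivity.
        rewrite wconcat_len. unfold itin; simpl. apply addrC; reflexivity.
Qed.

Lemma fin lam q s : itin lam q = wconcat s (itin lam crit) -> iterT lam (length s) q = crit.
Proof.
  intros E. apply addrC. change (itin lam q (length s) = SC). rewrite E, wconcat_len.
  unfold itin; simpl. apply addrC; reflexivity.
Qed.

Lemma per lam m : iterT lam m crit = crit -> forall q r, itin lam crit (q*m + r) = itin lam crit r.
Proof.
  intros H q r. rewrite Nat.add_comm, itin_shift. f_equal. induction q; simpl; auto.
  rewrite iterT_add, IHq; auto.
Qed.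

Theorem mainTheorem5 (lam : R) (Hlam : 1 < lam < 2)
  (Kplus : nat -> sym) (HKplus : right_limit_itin lam crit Kplus)
  (n : nat) (s : list sym) (Hlen : length s = n) (Hbin : binary_word s) :
  (exists p : R, 0 <= p <= tent lam crit /\
     (exists i : nat, iterT lam i p = crit) /\
     itin lam p = wconcat s (itin lam crit))
  <->
  (s = repeat S0 n \/
   (forall k : nat, (k <= n)%nat ->
      plex_lt (shift k (wconcat s (itin lam crit))) (shift 1 Kplus)) \/
   (exists (m : nat) (t : list sym),
      prime_period lam crit m /\ length t = (m - 1)%nat /\ binary_word t /\
      itin lam crit = repeat_inf (SC :: t) /\
      exists k : nat, (k < m - 1)%nat /\ s = skipn k t)).
Proof.
  subst n. rewrite tent_crit.
  assert (Hl : 1 < lam <= 2) by lra.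
  assert (Hcr : 0 <= crit <= 1) by (unfold crit; lra).
  split.
  - intros [p [[Hp0 Hp1] [_ Hit]]].
    assert (HpC : iterT lam (length s) p = crit) by (apply fin; auto).
    assert (Hbn : forall j, (j < length s)%nat -> iterT lam j p <> crit).
    { intros j Hj HC. apply addrC in HC. change (itin lam p j = SC) in HC.
      rewrite Hit, wconcat_lt in HC by auto.
      unfold binary_word in Hbin; rewrite Forall_forall in Hbin. destruct (Hbin (nth j s S0) (nth_In _ _ Hj)) as [X|X];
      rewrite X in HC; discriminate. }
    destruct (Rle_lt_or_eq_dec _ _ Hp1) as [Hlt|Heq].
    + right; left. intros k Hk.
      replace (shift k (wconcat s (itin lam crit))) with (itin lam (iterT lam k p)).
      2:{ apply functional_extensionality; intros i. unfold shift. rewrite <- Hit, itin_shift. reflexivity. }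
      apply (lemA lam Kplus _ (length s - k)); auto.
      * apply iterT_01; lra.
      * destruct k as [|k]; [exact Hlt|]. simpl.
        destruct (Rle_lt_or_eq_dec _ _ (tent_le lam (iterT lam k p) ltac:(lra))) as [?|E]; auto.
        apply tent_top in E; [|lra]. exfalso; apply (Hbn k); auto; lia.
      * rewrite <- itin_shift. replace (length s - k + k)%nat with (length s) by lia.
        unfold itin; apply addrC; auto.
    + destruct s as [|a s'].
      * left; reflexivity.
      * right; right. set (L := length (a::s')) in *.
        assert (HTc : tent lam crit = p) by (rewrite tent_crit; auto).
        assert (Hper : iterT lam (S L) crit = crit) by (rewrite iterT_S', HTc; auto).
        exists (S L), (a::s'). split; [|split; [lia|split; [auto|split]]].
        -- split; [lia|split; auto]. intros j Hj HC.
           destruct j as [|j]; [lia|]. rewrite iterT_S', HTc in HC. apply (Hbn j); auto. lia.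
        -- apply functional_extensionality; intros i.
           rewrite (Nat.div_mod_eq i (S L)), Nat.mul_comm, per by auto.
           unfold repeat_inf. replace (length (SC :: a :: s')) with (S L) by reflexivity.
           rewrite Nat.add_comm, Nat.Div0.mod_add, Nat.Div0.mod_mod.
           assert (Hr : (i mod S L < S L)%nat) by (apply Nat.mod_upper_bound; lia).
           destruct (i mod S L) as [|r].
           ++ unfold itin; simpl. apply addrC; reflexivity.
           ++ rewrite itin_S, HTc, Hit, wconcat_lt by (unfold L in *; lia). reflexivity.
        -- exists O. split; [unfold L; simpl; lia|reflexivity].
  - intros [H1|[H2|H3]].
    + destruct (build0 lam (length s) Hl) as [q [Hq E]]. rewrite <- H1 in E.
      exists q. split; [lra|]. split; auto. exists (length s). apply fin; auto.
    + destruct (build lam Kplus s Hl HKplus Hbin H2) as [q [Hq E]].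
      exists q. split; auto. split; auto. exists (length s). apply fin; auto.
    + destruct H3 as [m [t [_ [Hlt [_ [Hc [k [Hk Hs]]]]]]]].
      assert (E : itin lam (iterT lam (S k) crit) = wconcat s (itin lam crit)).
      { apply functional_extensionality; intros i. rewrite <- itin_shift.
        subst s. rewrite Hc. unfold wconcat, repeat_inf. rewrite length_skipn.
        replace (length (SC :: t)) with (S (length t)) by reflexivity.
        destruct (Nat.ltb i (length t - k)) eqn:El.
        - apply Nat.ltb_lt in El. rewrite Nat.mod_small by lia.
          rewrite nth_skipn, Nat.add_succ_r. simpl. f_equal. lia.
        - apply Nat.ltb_ge in El.
          replace (i + S k)%nat with ((i - (length t - k)) + 1 * S (length t))%nat by lia.
          rewrite Nat.Div0.mod_add. reflexivity. }
      exists (iterT lam (S k) crit). split; [|split; auto].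
      * simpl. pose proof (tent_01 lam (iterT lam k crit) ltac:(lra) (iterT_01 lam k crit ltac:(lra) Hcr)). pose proof (tent_le lam (iterT lam k crit) ltac:(lra)). lra.
      * exists (length s). apply fin; auto.
Qed.
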